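(* Let $G=(V,E)$ be a reduced undirected graph (parallel edges allowed) with terminals $s,t$, and let $T\subseteq E$ be a tracking edge set for $G$. Then every cycle of $G$ contains an edge belonging to $T$.
   Context: An $s$-$t$ path is a simple path from $s$ to $t$. A set $T\subseteq E$ is a tracking edge set if for any two distinct $s$-$t$ paths $P_1,P_2$, the sequence of edges of $T\cap E(P_1)$ in the order traversed along $P_1$ differs from the sequence of edges of $T\cap E(P_2)$ in the order traversed along $P_2$. A graph is reduced if every vertex and every edge lies on at least one $s$-$t$ path. *)

(* Defs.v *)
From mathcomp Require Import all_boot.
Set Implicit Arguments. Unset Strict Implicit. Unset Printing Implicit Defensive.

(* A finite undirected multigraph: vertex type V, edge type E (parallel edges
   are just distinct elements of E with the same endpoints), and
   ends e = the two endpoints of e (the orientation of the pair is irrelevant). *)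

Definition joins (V E : finType) (ends : E -> V * V) (e : E) (u v : V) : bool :=
  (ends e == (u, v)) || (ends e == (v, u)).

Fixpoint trail_from (V E : finType) (ends : E -> V * V) (u : V)
    (P : seq E) (vs : seq V) : bool :=
  match P, vs with
  | [::], [::] => true
  | e :: P', v :: vs' => joins ends e u v && trail_from ends v P' vs'
  | _, _ => false
  end.

Definition st_path_with (V E : finType) (ends : E -> V * V) (s t : V)
    (P : seq E) (vs : seq V) : bool :=
  [&& trail_from ends s P vs, uniq (s :: vs) & last s vs == t].

Definition st_path (V E : finType) (ends : E -> V * V) (s t : V) (P : seq E) : Prop :=
  exists vs : seq V, st_path_with ends s t P vs.

Definition reduced (V E : finType) (ends : E -> V * V) (s t : V) : Prop :=
  (forall v : V, exists P vs, st_path_with ends s t P vs /\ v \in s :: vs) /\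
  (forall e : E, exists P, st_path ends s t P /\ e \in P).

Definition tracking (V E : finType) (ends : E -> V * V) (s t : V) (T : {set E}) : Prop :=
  forall P1 P2 : seq E, st_path ends s t P1 -> st_path ends s t P2 ->
    P1 <> P2 -> [seq e <- P1 | e \in T] <> [seq e <- P2 | e \in T].

(* A cycle: a closed walk u -> v1 -> ... -> v_{k-1} -> u with k >= 1 edges,
   pairwise distinct vertices u, v1, ..., v_{k-1} and pairwise distinct edges
   (so two parallel edges form a cycle of length 2). *)
Definition is_cycle (V E : finType) (ends : E -> V * V) (C : seq E) : Prop :=
  exists (u : V) (vs : seq V),
    [&& 0 < size C, trail_from ends u C (rcons vs u), uniq (u :: vs) & uniq C].

(* Main.v *)
Require Import Defs.
From mathcomp Require Import all_boot.
Set Implicit Arguments. Unset Strict Implicit. Unset Printing Implicit Defensive.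

Section Aux.
Variables (V E : finType) (ends : E -> V * V).
Local Notation tr := (trail_from ends).

Lemma joinsC e a b : joins ends e a b = joins ends e b a.
Proof. by rewrite /joins orbC. Qed.

Lemma tr_size u P vs : tr u P vs -> size P = size vs.
Proof. by elim: P u vs => [|e P IH] u [|v vs] //= /andP[_ /IH ->]. Qed.

Lemma tr_cat u P1 P2 vs1 vs2 : size P1 = size vs1 ->
  tr u (P1 ++ P2) (vs1 ++ vs2) = tr u P1 vs1 && tr (last u vs1) P2 vs2.
Proof.
elim: P1 u vs1 => [|e P IH] u [|v vs] //= [Hs].
by rewrite IH // andbA.
Qed.

Lemma tr_rcons u P e vs v : size P = size vs ->
  tr u (rcons P e) (rcons vs v) = tr u P vs && joins ends e (last u vs) v.
Proof. by move=> Hs; rewrite -!cats1 tr_cat //= andbT. Qed.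

Lemma tr_rev u P vs : tr u P vs -> tr (last u vs) (rev P) (rev (belast u vs)).
Proof.
elim: P u vs => [|e P IH] u [|v vs] //= /andP[Hj Ht].
rewrite rev_cons rev_cons tr_rcons; last by rewrite !size_rev size_belast (tr_size Ht).
rewrite IH //=.
have H : rev (v :: vs) = last v vs :: rev (belast v vs) by rewrite lastI rev_rcons.
have := congr1 (last v) H; rewrite rev_cons last_rcons /= => <-.
by rewrite joinsC.
Qed.

Lemma split_first (c : pred V) u P vs : tr u P vs -> has c (u :: vs) ->
  exists P1 P2 vs1 vs2, [/\ P = P1 ++ P2, vs = vs1 ++ vs2, tr u P1 vs1,
     tr (last u vs1) P2 vs2 & c (last u vs1) && all (predC c) (belast u vs1)].
Proof.
elim: P u vs => [|e P IH] u [|v vs] //=.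
- by move=> cu; exists [::], [::], [::], [::]; split => //=; rewrite cu.
- move=> /andP[Hj Ht] Hh.
  have [cu|ncu] := boolP (c u).
  + by exists [::], (e :: P), [::], (v :: vs); rewrite /= Hj Ht cu.
  + move: Hh; rewrite (negbTE ncu) /= => hv.
    have [P1 [P2 [vs1 [vs2 [-> -> H1 H2 /andP[H3 H4]]]]]] := IH v vs Ht hv.
    by exists (e :: P1), P2, (v :: vs1), vs2; rewrite /= Hj H1 H2 H3 /= ncu H4.
Qed.

Lemma split_last (c : pred V) u P vs : tr u P vs -> has c (u :: vs) ->
  exists P1 P2 vs1 vs2, [/\ P = P1 ++ P2, vs = vs1 ++ vs2, tr u P1 vs1,
     tr (last u vs1) P2 vs2 & c (last u vs1) && all (predC c) vs2].
Proof.
elim: P u vs => [|e P IH] u [|v vs] //=.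
- by move=> cu; exists [::], [::], [::], [::]; split => //=; rewrite cu.
- move=> /andP[Hj Ht] Hh.
  have [hv|nhv] := boolP (c v || has c vs).
  + have [P1 [P2 [vs1 [vs2 [-> -> H1 H2 H3]]]]] := IH v vs Ht hv.
    by exists (e :: P1), P2, (v :: vs1), vs2; rewrite /= Hj H1 H2 H3.
  + exists [::], (e :: P), [::], (v :: vs); rewrite /= Hj Ht.
    move: Hh; rewrite (negbTE nhv) orbF => -> /=.
    by split => //; move: nhv; rewrite negb_or => /andP[-> /=]; rewrite all_predC.
Qed.

Lemma edge_in u P vs e : tr u P vs -> e \in P ->
  exists a b, [/\ joins ends e a b, a \in belast u vs & b \in vs].
Proof.
elim: P u vs => [|f P IH] u [|v vs] //= /andP[Hj Ht].
rewrite inE => /orP[/eqP->|He].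
- by exists u, v; rewrite Hj !inE !eqxx.
- have [a [b [H1 H2 H3]]] := IH v vs Ht He.
  by exists a, b; rewrite H1 !inE H2 H3 !orbT.
Qed.

Lemma joins_sub e a b a' b' : joins ends e a b -> joins ends e a' b' ->
  (a \in [:: a'; b']) && (b \in [:: a'; b']).
Proof.
by rewrite /joins => /orP[]/eqP-> /orP[]/eqP[-> ->]; rewrite !inE !eqxx ?orbT.
Qed.

Lemma assemble (c : pred V) s t x y A Q B avs W bvs :
  tr s A avs -> last s avs = x -> tr x Q W -> last x W = y ->
  tr y B bvs -> last y bvs = t ->
  uniq (s :: avs ++ bvs) -> all (predC c) (belast s avs) ->
  all (predC c) bvs -> all c W -> x \notin W -> uniq W ->
  st_path_with ends s t (A ++ Q ++ B) (avs ++ W ++ bvs).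
Proof.
move=> HA Hx HQ Hy HB Ht Hu Hnc1 Hnc2 HcW HxW HuW.
apply/and3P; split.
- by rewrite tr_cat ?(tr_size HA) // HA Hx tr_cat ?(tr_size HQ) // HQ Hy HB.
- have Hmem z : z \in s :: avs -> (z == x) || (z \in belast s avs).
    by rewrite lastI Hx mem_rcons inE.
  move: Hu; rewrite -!cat_cons !cat_uniq => /and3P[Hu1 Hd Hu2].
  rewrite Hu1 HuW Hu2 has_cat negb_or Hd !andbT /=.
  apply/andP; split.
  + apply/hasPn => w Hw; apply/negP => /Hmem /orP[/eqP Ewx|Hb].
     * by move: HxW; rewrite -Ewx Hw.
     * by move/allP: Hnc1 => /(_ _ Hb) /=; rewrite (allP HcW _ Hw).
  + apply/hasPn => w Hw; apply/negP => HwW.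
     by move/allP: Hnc2 => /(_ _ Hw) /=; rewrite (allP HcW _ HwW).
- by rewrite !last_cat Hx Hy Ht.
Qed.

End Aux.
Lemma cat_canl (T : Type) (a x y : seq T) : a ++ x = a ++ y -> x = y.
Proof. by elim: a => // h a IH [] /IH. Qed.

Theorem mainTheorem10 (V E : finType) (ends : E -> V * V) (s t : V) (T : {set E}) :
  reduced ends s t -> tracking ends s t T ->
  forall C : seq E, is_cycle ends C -> exists2 e, e \in C & e \in T.
Proof.
move=> [_ Hred] Htr C [u [vs /and4P[HsC HtC Huv HuC]]].
have [/hasP[e He1 He2] | Hn] := boolP (has (mem T) C); first by exists e.
exfalso.
set ws := rcons vs u in HtC.
have Hwsu : uniq ws by rewrite /ws rcons_uniq.
have Hlu : last u ws = u by rewrite /ws last_rcons.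
have Huw : u \in ws by rewrite /ws mem_rcons inE eqxx.
have Hcend : forall e a b, e \in C -> joins ends e a b -> (a \in ws) && (b \in ws).
  move=> e a b He Hj.
  have [a' [b' [Hj' Ha' Hb']]] := edge_in HtC He.
  have Ha'w : a' \in ws.
    by move: (mem_belast Ha'); rewrite inE => /orP[/eqP->|].
  by move: (joins_sub Hj Hj') => /andP; rewrite !inE => -[/orP[]/eqP-> /orP[]/eqP->];
    rewrite ?Ha'w ?Hb'.
have [e0 He0] : exists e0, e0 \in C by case: (C) HsC => // e0 ? _; exists e0; rewrite inE eqxx.
have [P [[ps Hp] He0P]] := Hred e0.
move: Hp => /and3P[HtP HuP /eqP HlP].
pose cyc := fun z : V => z \in ws.
have Hhas : has cyc (s :: ps).
  have [a [b [Hj _ Hb]]] := edge_in HtP He0P.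
  apply/hasP; exists b; first by rewrite inE Hb orbT.
  by case/andP: (Hcend _ _ _ He0 Hj).
have [A [R [avs [rvs [EP Eps HA HR /andP[Hcx Hnca]]]]]] := split_first HtP Hhas.
set x := last s avs in HR Hcx.
have [M [B [mvs [bvs [ER Erv HM HB /andP[Hcy Hncb]]]]]] :=
  split_last HR (introT orP (or_introl Hcx)).
set y := last x mvs in HB Hcy.
have Hu3 : uniq (s :: avs ++ mvs ++ bvs) by rewrite -Erv -Eps.
have Hxsa : x \in s :: avs by apply: mem_last.
have Hlt : last y bvs = t by move: HlP; rewrite Eps Erv !last_cat.
have Hxy : x != y.
  apply/eqP => Exy.
  move: He0P; rewrite EP ER !mem_cat => /or3P[HeA|HeM|HeB].
  - have [a [b [Hj Ha _]]] := edge_in HA HeA.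
    case/andP: (Hcend _ _ _ He0 Hj) => Haw _.
    by move/allP: Hnca => /(_ _ Ha) /=; rewrite /cyc Haw.
  - have [a [b [Hj _ Hb]]] := edge_in HM HeM.
    move: Exy Hb Hu3; rewrite /y; case: (mvs) => // m mvs' Exy _ Hu3; move: Exy => /= Exy.
    have Hym : last m mvs' \in m :: mvs' by apply: mem_last.
    move: Hu3; rewrite (_ : s :: avs ++ (m :: mvs') ++ bvs = (s :: avs) ++ ((m :: mvs') ++ bvs)) // cat_uniq => /and3P[_ /negP Hd _]; apply: Hd.
    apply/hasP; exists (last m mvs'); first by rewrite mem_cat Hym.
    by rewrite -Exy.
  - have [a [b [Hj _ Hb]]] := edge_in HB HeB.
    case/andP: (Hcend _ _ _ He0 Hj) => _ Hbw.
    by move/allP: Hncb => /(_ _ Hb) /=; rewrite /cyc Hbw.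
have Hxw : x \in ws by [].
have Hyw : y \in ws by [].
have Hh1 : has (pred1 x) (u :: ws) by rewrite has_pred1 inE Hxw orbT.
have [C1 [C2 [ws1 [ws2 [EC Ews HC1 HC2 /andP[/eqP Hl1 _]]]]]] := split_first HtC Hh1.
rewrite Hl1 in HC2.
have Hl2 : last x ws2 = u by rewrite -Hl1 -last_cat -Ews Hlu.
have HC' : trail_from ends x (C2 ++ C1) (ws2 ++ ws1).
  by rewrite tr_cat ?(tr_size HC2) // HC2 Hl2.
have Hlx' : last x (ws2 ++ ws1) = x by rewrite last_cat Hl2 Hl1.
have Hu' : uniq (ws2 ++ ws1) by rewrite uniq_catC -Ews.
have Hmem' : forall z, (z \in ws2 ++ ws1) = (z \in ws) by move=> z; rewrite Ews !mem_cat orbC.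
have HsubC : forall e, e \in C2 ++ C1 -> e \in C by move=> e; rewrite EC !mem_cat orbC.
have Hh2 : has (pred1 y) (x :: ws2 ++ ws1) by rewrite has_pred1 inE Hmem' Hyw orbT.
have [D1 [D2 [W1 [W2 [EC' EW' HD1 HD2 /andP[/eqP Hly _]]]]]] := split_first HC' Hh2.
rewrite Hly in HD2.
have Hl2y : last y W2 = x by rewrite -Hly -last_cat -EW' Hlx'.
have HuW : uniq (W1 ++ W2) by rewrite -EW'.
case: W1 EW' HD1 Hly HuW => [|w1 W1'] EW' HD1 Hly HuW.
  by move: Hxy; rewrite -Hly /= eqxx.
case: W2 EW' HD2 Hl2y HuW => [|w2 W2'] EW' HD2 Hl2y HuW.
  by move: Hxy; rewrite -Hl2y /= eqxx.
have HyW1 : y \in w1 :: W1' by rewrite -Hly /=; apply: mem_last.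
have HxW2 : x \in w2 :: W2' by rewrite -Hl2y /=; apply: mem_last.
have HcW : forall z, z \in (w1 :: W1') ++ (w2 :: W2') -> cyc z.
  by move=> z Hz; rewrite /cyc -Hmem' EW'.
have Hd : forall z, z \in w1 :: W1' -> z \in w2 :: W2' -> False.
  move=> z H1 H2; move: HuW; rewrite cat_uniq => /and3P[_ /negP Hd _]; apply: Hd.
  by apply/hasP; exists z.
have Hu_ab : uniq (s :: avs ++ bvs).
  apply: subseq_uniq Hu3.
  exact: (cat_subseq (subseq_refl (s :: avs)) (suffix_subseq mvs bvs)).
have Hp1 : st_path ends s t (A ++ D1 ++ B).
  exists (avs ++ (w1 :: W1') ++ bvs).
  apply: (assemble (c := cyc)) HA _ HD1 Hly HB Hlt Hu_ab Hnca Hncb _ _ _ => //.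
  - by apply/allP => z Hz; apply: HcW; rewrite mem_cat Hz.
  - by apply/negP => H; apply: (Hd x).
  - by move: HuW; rewrite cat_uniq => /and3P[].
have HD2r := tr_rev HD2; rewrite Hl2y in HD2r.
have Hbel : belast y (w2 :: W2') = y :: belast w2 W2' by [].
have HW2e : w2 :: W2' = rcons (belast w2 W2') x by rewrite lastI -Hl2y.
have HuW2 : uniq (w2 :: W2') by move: HuW; rewrite cat_uniq => /and3P[].
move: HuW2; rewrite HW2e rcons_uniq => /andP[HxB HuB].
have Hp2 : st_path ends s t (A ++ rev D2 ++ B).
  exists (avs ++ rev (belast y (w2 :: W2')) ++ bvs).
  apply: (assemble (c := cyc)) HA _ HD2r _ HB Hlt Hu_ab Hnca Hncb _ _ _ => //.
  - by rewrite Hbel rev_cons last_rcons.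
  - apply/allP => z; rewrite mem_rev Hbel inE => /orP[/eqP->|Hz] //.
    by apply: HcW; rewrite mem_cat HW2e mem_rcons inE Hz !orbT.
  - rewrite mem_rev Hbel inE negb_or HxB andbT; exact: Hxy.
  - rewrite rev_uniq Hbel /= HuB andbT; apply/negP => Hz; apply: (Hd y) => //.
    by rewrite HW2e mem_rcons inE Hz orbT.
have Hf : forall D : seq E, {subset D <= C} -> [seq e <- D | e \in T] = [::].
  elim=> [|e D IH] Hs //=.
  have HeT : e \notin T.
    by apply/negP => HeT; move/negP: Hn; apply; apply/hasP; exists e => //; apply: Hs; rewrite inE eqxx.
  by rewrite (negbTE HeT); apply: IH => z Hz; apply: Hs; rewrite inE Hz orbT.
refine (Htr _ _ Hp1 Hp2 _ _).
- move=> Heq.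
  have E1 : D1 = rev D2.
    move: Heq => /cat_canl /(congr1 rev); rewrite !rev_cat => /cat_canl /(congr1 rev).
    by rewrite !revK.
  have [d Hd1] : exists d, d \in D1.
    by move: (tr_size HD1); case: (D1) => // d ? _; exists d; rewrite inE eqxx.
  have Hd2 : d \in D2 by rewrite -mem_rev -E1.
  move: HuC; rewrite EC uniq_catC EC' cat_uniq => /and3P[_ /negP H _]; apply: H.
  by apply/hasP; exists d.
- rewrite !filter_cat (Hf D1) ?(Hf (rev D2)) //.
  + by move=> z; rewrite mem_rev => Hz; apply: HsubC; rewrite EC' mem_cat Hz orbT.
  + by move=> z Hz; apply: HsubC; rewrite EC' mem_cat Hz.
Qed.
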